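(* Let ${\sf APE}$ be the non-symmetric suboperad of ${\sf T}\mathbb{N}$ generated by $01$. Then the elements of ${\sf APE}$ of arity $n$ are exactly the words $x$ of length $n$ over $\mathbb{N}$ satisfying $x_1=0$ and $1\le x_{i+1}\le x_i+1$ for all $1\le i\le n-1$. Moreover, the elements of ${\sf APE}$ of arity $n$ are in bijection with the rooted plane trees with $n$ nodes. Finally, ${\sf APE}$ is isomorphic (as a non-symmetric operad) to the free non-symmetric operad on one generator of arity two.
   Context: Let $\mathbb{N}$ be the additive monoid of nonnegative integers. ${\sf T}\mathbb{N}=\biguplus_{n\ge1}\mathbb{N}^n$, elements of arity $n$ being words $x=(x_1,\dots,x_n)$ of length $n$ over $\mathbb{N}$ (written without separators, e.g. $01=(0,1)$), with partial compositions $x\circ_i y:=(x_1,\dots,x_{i-1},x_i+y_1,\dots,x_i+y_m,x_{i+1},\dots,x_n)$ for $x$ of arity $n$, $y$ of arity $m$, $1\le i\le n$; it is a non-symmetric set-operad with unit $(0)$. The non-symmetric suboperad generated by a set $S$ is the smallest subset containing $S$ and the unit $(0)$ and closed under all partial compositions $\circ_i$. *)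

(* Defs.v *)
From mathcomp Require Import all_boot.
Set Implicit Arguments. Unset Strict Implicit. Unset Printing Implicit Defensive.

(* Elements of T N: nonempty words over nat, represented as seq nat;
   the arity of x is size x. *)

(* Partial composition x \circ_i y (1 <= i <= size x):
   (x_1,...,x_{i-1}, x_i+y_1, ..., x_i+y_m, x_{i+1}, ..., x_n). *)
Definition ocomp (x : seq nat) (i : nat) (y : seq nat) : seq nat :=
  take i.-1 x ++ map (addn (nth 0 x i.-1)) y ++ drop i x.

Definition unitTN : seq nat := [:: 0].

Inductive APE : seq nat -> Prop :=
  | APE_gen  : APE [:: 0; 1]
  | APE_unit : APE unitTN
  | APE_comp x y i : APE x -> APE y -> 1 <= i <= size x -> APE (ocomp x i y).

Inductive ptree : Type := PNode of seq ptree.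

Fixpoint pnodes (t : ptree) : nat :=
  let: PNode ts := t in (sumn (map pnodes ts)).+1.

(* The free non-symmetric operad on one generator of arity two:
   planar binary trees, arity = number of leaves, unit = Leaf,
   generator = Bin Leaf Leaf, partial composition t \circ_i s = grafting
   s on the i-th leaf (from the left) of t. *)
Inductive btree : Type := Leaf | Bin of btree & btree.

Fixpoint leaves (t : btree) : nat :=
  match t with Leaf => 1 | Bin l r => leaves l + leaves r end.

(* graft t k s : replace the leaf of t with 0-based index k by s. *)
Fixpoint graft (t : btree) (k : nat) (s : btree) : btree :=
  match t with
  | Leaf => if k == 0 then s else Leaf
  | Bin l r => if k < leaves l then Bin (graft l k s) r
               else Bin l (graft r (k - leaves l) s)
  end.

Definition bcomp (t : btree) (i : nat) (s : btree) : btree := graft t i.-1 s.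

(* Main.v *)
Require Import Defs.
From Stdlib Require Import ProofIrrelevance ClassicalEpsilon.
From mathcomp Require Import all_boot zify.

Definition Rs (a b : nat) : bool := (1 <= b <= a.+1).
Definition W (x : seq nat) := exists rest, x = 0 :: rest /\ path Rs 0 rest.

Fixpoint phi (t : btree) : seq nat :=
  match t with Leaf => [:: 0] | Bin l r => phi l ++ map succn (phi r) end.

Lemma path_ge1 a b : path Rs a b -> all (leq 1) b.
Proof. elim: b a => //= v b IH a /andP[/andP[h1 _] /IH ->]; by rewrite h1. Qed.

Lemma path_S a b : path Rs a b -> path Rs a.+1 (map succn b).
Proof.
move=> h; rewrite path_map; apply: sub_path h => u v; rewrite /relpre /Rs /=; lia.
Qed.

Lemma phiW t : W (phi t).
Proof.
elim: t => [|l [a [Ea ha]] r [b [Eb hb]]]; first by exists [::].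
rewrite /= Ea Eb.
exists (a ++ 1 :: map succn b); split => //.
rewrite cat_path ha /= path_S // andbT /Rs; apply/andP; lia.
Qed.

Lemma size_phi t : size (phi t) = leaves t.
Proof. elim: t => //= l hl r hr; by rewrite size_cat size_map hl hr. Qed.

Lemma split_uniq a a' b b' : all (leq 2) b -> all (leq 2) b' ->
  a ++ 1 :: b = a' ++ 1 :: b' -> a = a' /\ b = b'.
Proof.
elim: a a' => [|u a IH] [|u' a'] //= hb hb'.
- by case=> ->.
- by case=> <- E; move: hb; rewrite E all_cat /= andbF.
- by case=> -> E; move: hb'; rewrite -E all_cat /= andbF.
- case=> -> /(IH _ hb hb') [-> ->] //.
Qed.

Lemma leaves_pos t : 0 < leaves t.
Proof. elim: t => //= l hl r hr; lia. Qed.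

Lemma phi_inj : injective phi.
Proof.
elim=> [|l IHl r IHr] [|l' r'] //=.
- move=> /(congr1 size); rewrite size_cat size_map !size_phi /=.
  have := leaves_pos l'; have := leaves_pos r'; lia.
- move=> /(congr1 size); rewrite size_cat size_map !size_phi /=.
  have := leaves_pos l; have := leaves_pos r; lia.
case: (phiW r) (phiW r') => [b [Eb hb]] [b' [Eb' hb']].
rewrite Eb Eb' /= => E.
have hb2 : all (leq 2) (map succn b) by rewrite all_map; exact: path_ge1 hb.
have hb2' : all (leq 2) (map succn b') by rewrite all_map; exact: path_ge1 hb'.
case: (split_uniq _ _ _ _ hb2 hb2' E) => /IHl -> /(inj_map succn_inj) eb.
by rewrite (IHr r') // Eb Eb' eb.
Qed.

Lemma graft_phi t k s : k < leaves t -> phi (graft t k s) = ocomp (phi t) k.+1 (phi s).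
Proof.
elim: t k => [|l IHl r IHr] k /=.
- case: k => // _; rewrite /ocomp /= cats0 -[LHS]map_id; apply: eq_map => ?; by rewrite add0n.
- rewrite /ocomp /= -!size_phi => hk; case: ifP => hkl /=.
  + rewrite IHl; last by rewrite -size_phi.
    rewrite /ocomp /= -!catA (takel_cat _ (ltnW hkl)) nth_cat hkl.
    congr (_ ++ (_ ++ _)); rewrite drop_cat; case: ltnP => h' //.
    have -> : k.+1 - size (phi l) = 0 by lia.
    by rewrite drop0 drop_oversize.
  + have hj : k - size (phi l) < leaves r by rewrite -size_phi; lia.
    rewrite IHr // /ocomp take_cat hkl nth_cat hkl drop_cat.
    have -> : (k.+1 < size (phi l)) = false by lia.
    have -> : k.+1 - size (phi l) = (k - size (phi l)).+1 by lia.
    rewrite !map_cat -catA map_take map_drop (nth_map 0); last by rewrite [size (phi r)]size_phi.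
    congr (_ ++ (_ ++ _)).
    congr (_ ++ _); rewrite -map_comp; apply: eq_map => ? /=; by rewrite addSn.
Qed.

Lemma bcomp_phi t s i : 1 <= i <= leaves t -> phi (bcomp t i s) = ocomp (phi t) i (phi s).
Proof. case: i => // i /= h; rewrite /bcomp /= graft_phi //. Qed.

Lemma APE_phi x : APE x <-> exists t, phi t = x.
Proof.
split.
- elim => [||y z i _ [t <-] _ [s <-] hi]; first by exists (Bin Leaf Leaf).
  + by exists Leaf.
  + exists (bcomp t i s); rewrite bcomp_phi // -size_phi; exact: hi.
- move=> [t <-]; elim: t => [|l hl r hr]; first exact: APE_unit.
  have -> : Bin l r = bcomp (bcomp (Bin Leaf Leaf) 2 r) 1 l by [].
  rewrite bcomp_phi; last by have := leaves_pos (bcomp (Bin Leaf Leaf) 2 r); lia.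
  have hb : 0 < 1 <= size (phi (bcomp (Bin Leaf Leaf) 2 r)).
    by rewrite size_phi; have := leaves_pos (bcomp (Bin Leaf Leaf) 2 r); lia.
  apply: (APE_comp _ hl hb).
  rewrite bcomp_phi //; apply: APE_comp => //; exact: APE_gen.
Qed.

Lemma split_last (s : seq nat) : all (leq 2) s \/
  exists p c q, s = p ++ c :: q /\ c < 2 /\ all (leq 2) q.
Proof.
elim/last_ind: s => [|s c IH]; first by left.
case: (leqP 2 c) => hc.
- case: IH => [h|[p [c' [q [-> [h1 h2]]]]]].
  + by left; rewrite all_rcons hc h.
  + right; exists p, c', (rcons q c); by rewrite rcons_cat rcons_cons all_rcons hc h2.
- by right; exists s, c, [::]; rewrite cats1.
Qed.

Lemma pred_path a q : all (leq 2) q -> path Rs a.+1 q -> path Rs a (map predn q).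
Proof.
elim: q a => //= v q IH a /andP[h1 h2] /andP[h3 h4].
apply/andP; split; first by move: h1 h3; rewrite /Rs; lia.
apply: IH => //; have -> : (v.-1).+1 = v by lia. done.
Qed.

Lemma succ_pred q : all (leq 1) q -> map succn (map predn q) = q.
Proof. elim: q => //= v q IH /andP[h1 h2]; rewrite IH //; congr (_ :: _); lia. Qed.

Lemma W_phi n x : size x <= n -> W x -> exists t, phi t = x.
Proof.
elim: n x => [|n IH] x hs [rest [Ex hr]]; first by move: hs; rewrite Ex.
case: rest Ex hr => [|v rest'] Ex hr; first by exists Leaf; rewrite Ex.
have hall := path_ge1 _ _ hr.
case: (split_last (v :: rest')) => [|[p [c [q [E [hc hq]]]]]].
- by move: hr => /= /andP[/andP[_ h] _] /andP[h2 _]; lia.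
move: hr hall; rewrite E cat_path all_cat /= => /andP[hp /andP[hc1 hq']] /andP[_ /andP[hc0 _]].
have c1 : c = 1 by lia.
subst c.
have Hq1 : path Rs 0 (map predn q) by apply: pred_path.
have [tl El] : exists t, phi t = 0 :: p.
  apply: IH; last by exists p.
  move: hs; rewrite Ex E /= size_cat /=; lia.
have [tr Er] : exists t, phi t = 0 :: map predn q.
  apply: IH; last by exists (map predn q).
  move: hs; rewrite Ex E /= size_cat size_map /=; lia.
exists (Bin tl tr); rewrite /= El Er Ex E /= succ_pred //.
by apply: sub_all hq => ? /ltnW.
Qed.

Lemma nthW x : 0 < size x ->
  (nth 0 x 0 = 0 /\ forall i, 1 <= i <= size x - 1 -> 1 <= nth 0 x i <= (nth 0 x i.-1).+1)
  <-> W x.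
Proof.
case: x => [|h rest] //= _; split.
- move=> [-> H]; exists rest; split => //; apply/(pathP 0) => i hi.
  have := H i.+1; rewrite /Rs /=; apply; lia.
- move=> [r [[-> ->] hp]]; split => // [[|i]] //= hi.
  by move/(pathP 0): hp => /(_ i); apply; lia.
Qed.

Fixpoint psi (t : btree) : ptree :=
  match t with Leaf => PNode [::]
  | Bin l r => match psi r with PNode ts => PNode (psi l :: ts) end end.

Fixpoint chi (t : ptree) : btree :=
  match t with PNode ts =>
    (fix go ts := match ts with [::] => Leaf | u :: us => Bin (chi u) (go us) end) ts end.

Lemma chi_psi b : chi (psi b) = b.
Proof.
elim: b => //= l hl r hr; case E: (psi r) => [ts] /=.
by rewrite hl; congr Bin; rewrite -[in RHS]hr E.
Qed.

Lemma psi_chi_aux n t : pnodes t <= n -> psi (chi t) = t.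
Proof.
elim: n t => [|n IH] [ts] //=.
elim: ts => //= u us IHus hs.
have -> : psi (chi u) = u by apply: IH; lia.
have := IHus; rewrite /=; move=> h; rewrite h //; lia.
Qed.

Lemma psi_chi t : psi (chi t) = t.
Proof. exact: (psi_chi_aux (pnodes t)). Qed.

Lemma pnodes_psi b : pnodes (psi b) = leaves b.
Proof.
elim: b => //= l hl r hr; case E: (psi r) => [ts] /=.
rewrite -hr E /= hl; lia.
Qed.

Definition dec (x : seq nat) (h : APE x) : btree :=
  proj1_sig (constructive_indefinite_description _ (proj1 (APE_phi x) h)).

Lemma dec_spec x h : phi (dec x h) = x.
Proof. rewrite /dec; by case: constructive_indefinite_description. Qed.

Lemma fP n (X : {x : seq nat | APE x /\ size x = n}) :
  pnodes (psi (@dec _ (proj1 (proj2_sig X)))) = n.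
Proof.
case: X => x [hx hs] /=; by rewrite pnodes_psi -size_phi dec_spec.
Qed.

Lemma gP n (T : {t : ptree | pnodes t = n}) :
  APE (phi (chi (proj1_sig T))) /\ size (phi (chi (proj1_sig T))) = n.
Proof.
case: T => t ht /=; split; first by apply/APE_phi; eexists.
by rewrite size_phi -pnodes_psi psi_chi.
Qed.

Lemma sig_eq (A : Type) (P : A -> Prop) (a b : sig P) : proj1_sig a = proj1_sig b -> a = b.
Proof. case: a b => a ha [b hb] /= E; subst b; f_equal; apply: proof_irrelevance. Qed.

Theorem mainTheorem3 :
  (* (1) description of the elements of APE of arity n *)
  (forall (n : nat) (x : seq nat), 0 < n -> size x = n ->
     (APE x <->
      (nth 0 x 0 = 0 /\
       forall i, 1 <= i <= n - 1 ->
         1 <= nth 0 x i <= (nth 0 x i.-1).+1)))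
  /\
  (* (2) bijection with rooted plane trees with n nodes *)
  (forall n : nat,
     exists (f : {x : seq nat | APE x /\ size x = n} -> {t : ptree | pnodes t = n})
            (g : {t : ptree | pnodes t = n} -> {x : seq nat | APE x /\ size x = n}),
       cancel f g /\ cancel g f)
  /\
  (* (3) isomorphism of ns operads with the free ns operad on one binary generator *)
  (exists phi : btree -> seq nat,
     injective phi /\
     (forall x, APE x <-> exists t, phi t = x) /\
     (forall t, size (phi t) = leaves t) /\
     phi Leaf = unitTN /\
     (forall t s i, 1 <= i <= leaves t ->
        phi (bcomp t i s) = ocomp (phi t) i (phi s))).
Proof.
Proof.
split; [|split].
- move=> n x hn hs; subst n; rewrite (nthW _ hn); split.
  + by move/APE_phi => [t <-]; exact: phiW.
  + move=> hw; apply/APE_phi; exact: (W_phi _ _ (leqnn _) hw).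
- move=> n.
  exists (fun X => exist (fun t => pnodes t = n) _ (fP _ X)),
    (fun T => exist (fun x => APE x /\ size x = n) _ (gP _ T)); split.
  + move=> [x [hx hs]]; apply: sig_eq => /=; by rewrite chi_psi dec_spec.
  + move=> [t ht]; apply: sig_eq => /=.
    set h := proj1 _.
    have := dec_spec _ h; move=> /phi_inj ->.
    by rewrite psi_chi.
- exists phi; split; first exact: phi_inj.
  split; first exact: APE_phi.
  split; first exact: size_phi.
  split => //; exact: bcomp_phi.
Qed.
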